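(* Let $R\in\mathbb R$ and let $f:[0,R)\to\mathbb R$ be continuously differentiable and satisfy (h1) $f(0)>0$, $f'(0)=-1$; (h2) $f'$ is strictly increasing and convex; (h3) $f(t)<0$ for some $t\in(0,R)$. Let $\kappa:=\sup_{0<t<R}\frac{-f(t)}{t}$, $\lambda:=\sup\{t\in[0,R):\kappa+f'(t)<0\}$, $\Theta:=\kappa/(2-\kappa)$, and \[\Omega:=\{(t,\varepsilon)\in\mathbb R^2:0\le t<\lambda,\ 0\le\varepsilon\le\kappa t,\ 0<f(t)+\varepsilon\}.\] If $0\le\theta\le\Theta$, $(t,\varepsilon)\in\Omega$, and \[t_+=t-(1+\theta)\frac{f(t)+\varepsilon}{f'(t)},\qquad \varepsilon_+=\varepsilon+2\theta(f(t)+\varepsilon),\] then $(t_+,\varepsilon_+)\in\Omega$, $t<t_+$, $\varepsilon\le\varepsilon_+$, and \[f(t_+)+\varepsilon_+<\Big(\frac{1+\theta^2}{2}\Big)(f(t)+\varepsilon).\] *)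

(* Defs.v *)
From Stdlib Require Import Reals.
From Coquelicot Require Import Coquelicot.
Open Scope R_scope.

(* df is the derivative of f on [0,R), derivatives taken within [0,R)
   (so at t = 0 it is the right derivative). *)
Definition has_derivative_on_0R (f df : R -> R) (R0 : R) : Prop :=
  forall t, 0 <= t < R0 ->
    filterlim (fun s => (f s - f t) / (s - t))
      (within (fun s => 0 <= s < R0 /\ s <> t) (locally t)) (locally (df t)).

Definition continuous_on_0R (df : R -> R) (R0 : R) : Prop :=
  forall t, 0 <= t < R0 ->
    filterlim df (within (fun s => 0 <= s < R0) (locally t)) (locally (df t)).

Definition C1_on_0R (f df : R -> R) (R0 : R) : Prop :=
  has_derivative_on_0R f df R0 /\ continuous_on_0R df R0.

Definition strictly_increasing_on_0R (g : R -> R) (R0 : R) : Prop :=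
  forall s t, 0 <= s -> s < t -> t < R0 -> g s < g t.

Definition convex_on_0R (g : R -> R) (R0 : R) : Prop :=
  forall s t a, 0 <= s < R0 -> 0 <= t < R0 -> 0 <= a <= 1 ->
    g (a * s + (1 - a) * t) <= a * g s + (1 - a) * g t.

Definition Omega (f : R -> R) (kappa lambda t eps : R) : Prop :=
  0 <= t < lambda /\ 0 <= eps <= kappa * t /\ 0 < f t + eps.

(* Main.v *)
Require Import Defs.
From Stdlib Require Import Reals Lra Classical.
From Coquelicot Require Import Coquelicot.
Open Scope R_scope.
Lemma ball_R (x e y : R) : ball x e y <-> Rabs (y - x) < e.
Proof. unfold ball; simpl. unfold AbsRing_ball, abs, minus, plus, opp; simpl. tauto. Qed.

Lemma deriv_int (f df : R -> R) R0 : has_derivative_on_0R f df R0 ->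
  forall x, 0 < x < R0 -> is_derive f x (df x).
Proof.
  intros H x Hx. apply is_derive_Reals. intros eps He.
  pose proof (H x (conj (Rlt_le _ _ (proj1 Hx)) (proj2 Hx))) as Hl.
  apply filterlim_locally with (eps := mkposreal eps He) in Hl.
  destruct Hl as [d Hd]. simpl in Hd.
  assert (Hp : 0 < Rmin d (Rmin x (R0 - x))).
  { destruct d as [d dp]; simpl. repeat apply Rmin_pos; lra. }
  exists (mkposreal _ Hp). simpl. intros h hne hlt.
  assert (h1 : Rabs h < d) by (eapply Rlt_le_trans; [exact hlt| apply Rmin_l]).
  assert (h2 : Rabs h < x) by (eapply Rlt_le_trans; [exact hlt| eapply Rle_trans; [apply Rmin_r|apply Rmin_l]]).
  assert (h3 : Rabs h < R0 - x) by (eapply Rlt_le_trans; [exact hlt| eapply Rle_trans; [apply Rmin_r|apply Rmin_r]]).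
  apply Rabs_def2 in h2. apply Rabs_def2 in h3.
  specialize (Hd (x + h)).
  assert (Hb : ball x d (x + h)) by (apply ball_R; replace (x + h - x) with h by ring; exact h1).
  specialize (Hd Hb).
  assert (HP : 0 <= x + h < R0 /\ x + h <> x) by (split; [lra| intro; apply hne; lra]).
  specialize (Hd HP). apply ball_R in Hd.
  replace (x + h - x) with h in Hd by ring. exact Hd.
Qed.

Lemma lip_at (f df : R -> R) R0 : has_derivative_on_0R f df R0 ->
  forall a, 0 <= a < R0 -> exists d K, 0 < d /\ 0 <= K /\
  forall x, a < x < a + d -> Rabs (f x - f a) <= K * (x - a).
Proof.
  intros H a Ha. pose proof (H a Ha) as Hl.
  apply filterlim_locally with (eps := mkposreal 1 Rlt_0_1) in Hl.
  destruct Hl as [d Hd]. simpl in Hd.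
  exists (Rmin d (R0 - a)), (Rabs (df a) + 1).
  assert (Hp : 0 < Rmin d (R0 - a)).
  { destruct d as [d dp]; simpl. repeat apply Rmin_pos; lra. }
  split; [exact Hp|]. split; [pose proof (Rabs_pos (df a)); lra|].
  intros x Hx.
  assert (h1 : x < a + d) by (pose proof (Rmin_l d (R0 - a)); lra).
  assert (h2 : x < R0) by (pose proof (Rmin_r d (R0 - a)); lra).
  assert (Hb : ball a d x) by (apply ball_R; rewrite Rabs_pos_eq; lra).
  specialize (Hd x Hb). assert (HP : 0 <= x < R0 /\ x <> a) by (split; lra).
  specialize (Hd HP). apply ball_R in Hd.
  set (q := (f x - f a) / (x - a)) in Hd.
  assert (E : f x - f a = q * (x - a)) by (unfold q; field; lra).
  rewrite E, Rabs_mult, (Rabs_pos_eq (x - a)) by lra.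
  apply Rmult_le_compat_r; [lra|].
  pose proof (Rabs_triang_inv q (df a)). change (Rabs (q - df a) < 1) in Hd; lra.
Qed.

Lemma mvt_right (phi dphi : R -> R) a b : a < b ->
  (forall x, a < x < b -> is_derive phi x (dphi x)) -> continuity_pt phi b ->
  (exists d K, 0 < d /\ 0 <= K /\ forall x, a < x < a + d -> Rabs (phi x - phi a) <= K * (x - a)) ->
  exists c, a <= c <= b /\ phi b - phi a = dphi c * (b - a).
Proof.
  intros Hab Hd Hb [d [K [Hd0 [HK HL]]]].
  set (psi := fun x => if Rle_dec x a then phi a else phi x).
  assert (Hloc : forall x, a < x -> locally x (fun y => phi y = psi y)).
  { intros x Hx. assert (Hp : 0 < x - a) by lra. exists (mkposreal _ Hp).
    intros y Hy. change (Rabs (y - x) < x - a) in Hy. apply Rabs_def2 in Hy.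
    unfold psi. destruct (Rle_dec y a); [lra| reflexivity]. }
  destruct (MVT_gen psi a b dphi) as [c [Hc Hc2]].
  - rewrite Rmin_left, Rmax_right by lra. intros x Hx.
    apply (is_derive_ext_loc phi); [apply Hloc; lra| apply Hd; exact Hx].
  - rewrite Rmin_left, Rmax_right by lra. intros x Hx.
    destruct (Req_dec x a) as [->|Hne].
    + intros eps He. simpl.
      exists (Rmin d (eps / (K + 1))). split.
      { apply Rmin_pos; [lra| apply Rdiv_lt_0_compat; lra]. }
      intros y [_ Hy]. unfold R_dist in *. unfold psi.
      destruct (Rle_dec a a) as [_|n]; [|lra].
      destruct (Rle_dec y a) as [|n].
      * rewrite Rminus_diag, Rabs_R0. exact He.
      * apply Rnot_le_lt in n. rewrite Rabs_pos_eq in Hy by lra.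
        assert (y - a < d) by (pose proof (Rmin_l d (eps / (K + 1))); lra).
        assert (y - a < eps / (K + 1)) by (pose proof (Rmin_r d (eps / (K + 1))); lra).
        specialize (HL y ltac:(lra)).
        eapply Rle_lt_trans; [exact HL|].
        apply Rle_lt_trans with ((K + 1) * (y - a)); [nra|].
        apply (Rmult_lt_compat_l (K + 1)) in H0; [|lra].
        replace ((K + 1) * (eps / (K + 1))) with eps in H0 by (field; lra). lra.
    + apply (continuity_pt_ext_loc phi); [apply Hloc; lra|].
      destruct (Req_dec x b) as [->|Hnb]; [exact Hb|].
      apply continuity_pt_filterlim. apply (@ex_derive_continuous R_AbsRing R_NormedModule).
      eexists. apply Hd. lra.
  - exists c. rewrite Rmin_left, Rmax_right in Hc by lra. split; [exact Hc|].
    unfold psi in Hc2. destruct (Rle_dec b a); [lra|].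
    destruct (Rle_dec a a); [|lra]. exact Hc2.
Qed.
Lemma mvt_phi (f df : R -> R) R0 : has_derivative_on_0R f df R0 ->
  forall a b p q, 0 <= a < b -> b < R0 ->
  exists c, a <= c <= b /\
   (f b - p * (b - a) - q * (b - a) ^ 2) - f a = (df c - p - 2 * q * (c - a)) * (b - a).
Proof.
  intros H a b p q Hab HbR.
  set (phi := fun u => f u - p * (u - a) - q * (u - a) ^ 2).
  assert (Hder : forall x, 0 < x < R0 -> is_derive phi x (df x - p - 2 * q * (x - a))).
  { intros x Hx. pose proof (deriv_int f df R0 H x Hx) as Hf.
    assert (Hp : is_derive (fun u => p * (u - a) + q * (u - a) ^ 2) x (p + 2 * q * (x - a))).
    { auto_derive; [exact I| ring]. }
    pose proof (is_derive_minus _ _ _ _ _ Hf Hp) as Hm.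
    replace (df x - p - 2 * q * (x - a)) with (minus (df x) (p + 2 * q * (x - a)))
      by (unfold minus, plus, opp; simpl; ring).
    apply (is_derive_ext (fun u => minus (f u) (p * (u - a) + q * (u - a) ^ 2))); [|exact Hm].
    intros u. unfold phi, minus, plus, opp; simpl; ring. }
  destruct (mvt_right phi (fun x => df x - p - 2 * q * (x - a)) a b) as [c [Hc Hc2]].
  - lra.
  - intros x Hx. apply Hder. lra.
  - apply continuity_pt_filterlim. apply (@ex_derive_continuous R_AbsRing R_NormedModule).
    eexists. apply Hder. lra.
  - destruct (lip_at f df R0 H a (conj (proj1 Hab) (Rle_lt_trans _ _ _ (Rlt_le _ _ (proj2 Hab)) HbR))) as [d [K [Hd [HK HL]]]].
    exists (Rmin d 1), (K + Rabs p + Rabs q). split; [apply Rmin_pos; lra|].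
    split; [pose proof (Rabs_pos p); pose proof (Rabs_pos q); lra|].
    intros x Hx.
    assert (x < a + d) by (pose proof (Rmin_l d 1); lra).
    assert (x - a < 1) by (pose proof (Rmin_r d 1); lra).
    specialize (HL x ltac:(lra)).
    unfold phi. replace (f x - p * (x - a) - q * (x - a) ^ 2 - (f a - p * (a - a) - q * (a - a) ^ 2))
      with ((f x - f a) + (- p * (x - a)) + (- q * (x - a) ^ 2)) by ring.
    eapply Rle_trans; [apply Rabs_triang|].
    eapply Rle_trans; [apply Rplus_le_compat_r; apply Rabs_triang|].
    rewrite !Rabs_mult, !Rabs_Ropp, (Rabs_pos_eq (x - a)) by lra.
    rewrite (Rabs_pos_eq ((x - a) ^ 2)) by (apply pow_le; lra).
    assert (Hs : (x - a) ^ 2 <= x - a) by (simpl; nra).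
    pose proof (Rabs_pos q). nra.
  - exists c. split; [exact Hc|]. unfold phi in Hc2.
    replace (a - a) with 0 in Hc2 by ring. rewrite <- Hc2. simpl. ring.
Qed.
Lemma div_le (a b c : R) : 0 < c -> a <= b * c -> a / c <= b.
Proof. intros. apply Rmult_le_reg_r with c; [lra|]. replace (a / c * c) with a by (field; lra). exact H0. Qed.
Lemma div_lt (a b c : R) : 0 < c -> a < b * c -> a / c < b.
Proof. intros. apply Rmult_lt_reg_r with c; [lra|]. replace (a / c * c) with a by (field; lra). exact H0. Qed.

Theorem lemma4p2 (R0 : R) (f df : R -> R)
  (hC1 : C1_on_0R f df R0)
  (h1a : f 0 > 0) (h1b : df 0 = -1)
  (h2a : strictly_increasing_on_0R df R0) (h2b : convex_on_0R df R0)
  (h3 : exists t, 0 < t < R0 /\ f t < 0)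
  (kappa : R)
  (hkappa : is_lub (fun y => exists t, 0 < t < R0 /\ y = - f t / t) kappa)
  (lambda : R)
  (hlambda : is_lub (fun s => 0 <= s < R0 /\ kappa + df s < 0) lambda)
  (theta t eps : R)
  (htheta : 0 <= theta <= kappa / (2 - kappa))
  (hOm : Omega f kappa lambda t eps) :
  let tp := t - (1 + theta) * (f t + eps) / df t in
  let ep := eps + 2 * theta * (f t + eps) in
  Omega f kappa lambda tp ep /\ t < tp /\ eps <= ep /\
  f tp + ep < ((1 + theta ^ 2) / 2) * (f t + eps).
Proof.
  intros tp ep.
  destruct hC1 as [hD hC].
  destruct hOm as [[ht0 htl] [[he0 hek] hg]].
  destruct hkappa as [kub klub]. destruct hlambda as [lub llub].
  destruct h3 as [tb [htb hftb]].
  assert (mvtf : forall a b, 0 <= a < b -> b < R0 -> exists c, a <= c <= b /\ f b - f a = df c * (b - a)).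
  { intros a b Hab HbR. destruct (mvt_phi f df R0 hD a b 0 0 Hab HbR) as [c [Hc E]].
    exists c; split; auto.
    replace (f b - f a) with (f b - 0 * (b - a) - 0 * (b - a) ^ 2 - f a) by ring.
    rewrite E. ring. }
  assert (mono : forall x y, 0 <= x -> x <= y -> y < R0 -> df x <= df y).
  { intros x y H1 H2 H3. destruct (Req_dec x y); [subst; lra|]. left; apply h2a; lra. }
  assert (tang : forall x u, 0 <= x < R0 -> 0 <= u < R0 -> f u >= f x + df x * (u - x)).
  { intros x u Hx Hu. destruct (Rtotal_order x u) as [Hlt|[Heq|Hgt]].
    - destruct (mvtf x u) as [c [Hc E]]; try lra.
      assert (df x <= df c) by (apply mono; lra). nra.
    - subst; lra.
    - destruct (mvtf u x) as [c [Hc E]]; try lra.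
      assert (df c <= df x) by (apply mono; lra). nra. }
  assert (stang : forall x u, 0 <= x -> x < u -> u < R0 -> f u > f x + df x * (u - x)).
  { intros x u Hx Hxu Hu. set (p := (x + u) / 2).
    assert (Hp1 : x < p) by (unfold p; lra). assert (Hp2 : p < u) by (unfold p; lra).
    destruct (mvtf p u) as [c [Hc E]]; try lra.
    assert (df x < df c) by (apply h2a; lra).
    pose proof (tang x p ltac:(lra) ltac:(lra)).
    assert (df x * (u - p) < df c * (u - p)) by (apply Rmult_lt_compat_r; lra).
    replace (u - x) with ((p - x) + (u - p)) by ring. rewrite Rmult_plus_distr_l. lra. }
  assert (kpos : 0 < kappa).
  { apply Rlt_le_trans with (- f tb / tb).
    - apply Rdiv_lt_0_compat; lra.
    - apply kub. exists tb. split; auto. }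
  assert (hkall : forall u, 0 < u < R0 -> f u + kappa * u >= 0).
  { intros u Hu. assert (- f u / u <= kappa) by (apply kub; exists u; split; auto).
    assert (- f u / u * u = - f u) by (field; lra). nra. }
  assert (k1 : kappa < 1).
  { set (w := f 0 / R0). assert (Hw : 0 < w) by (apply Rdiv_lt_0_compat; lra).
    assert (Hw2 : f 0 = w * R0) by (unfold w; field; lra).
    assert (kappa <= 1 - w); [|lra].
    apply klub. intros y [u [Hu ->]]. apply div_le; [lra|].
    pose proof (tang 0 u ltac:(lra) ltac:(lra)). rewrite h1b in H. nra. }
  assert (lamR : lambda <= R0) by (apply llub; intros y [[_ Hy] _]; lra).
  assert (below : forall x, 0 <= x < lambda -> kappa + df x < 0).
  { intros x Hx.
    destruct (classic (exists y, (0 <= y < R0 /\ kappa + df y < 0) /\ x < y)) as [[y [[Hy1 Hy2] Hxy]]|Hn].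
    - assert (df x < df y) by (apply h2a; lra). lra.
    - exfalso. assert (lambda <= x); [|lra]. apply llub. intros y Hy.
      destruct (Rle_dec y x) as [|Hyx]; [auto|]. exfalso. apply Hn. exists y. split; [exact Hy| lra]. }
  assert (above : lambda < R0 -> kappa + df lambda >= 0).
  { intros HlR. apply Rnot_lt_ge. intro Hneg.
    pose proof (hC lambda (conj (Rle_trans _ _ _ ht0 (Rlt_le _ _ htl)) HlR)) as Hc.
    assert (He : 0 < - (kappa + df lambda)) by lra.
    apply filterlim_locally with (eps := mkposreal _ He) in Hc.
    destruct Hc as [del Hdel]. simpl in Hdel.
    assert (Hm : 0 < Rmin del (R0 - lambda)) by (destruct del; simpl; apply Rmin_pos; lra).
    set (s := lambda + Rmin del (R0 - lambda) / 2).
    assert (Hs1 : s < R0) by (unfold s; pose proof (Rmin_r del (R0 - lambda)); lra).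
    assert (Hs2 : s - lambda < del) by (unfold s; pose proof (Rmin_l del (R0 - lambda)); lra).
    assert (Hb : ball lambda del s) by (change (Rabs (s - lambda) < del); rewrite Rabs_pos_eq; unfold s in *; lra).
    specialize (Hdel s Hb ltac:(unfold s in *; lra)).
    change (Rabs (df s - df lambda) < - (kappa + df lambda)) in Hdel.
    apply Rabs_def2 in Hdel.
    assert (s <= lambda) by (apply lub; split; [unfold s in *; lra| lra]).
    unfold s in *; lra. }
  set (d := df t).
  assert (hd : d < - kappa) by (pose proof (below t ltac:(lra)); unfold d; lra).
  assert (hd1 : -1 <= d) by (rewrite <- h1b; unfold d; apply mono; lra).
  assert (Key : f t + kappa * t < (- kappa - d) * (lambda - t)).
  { set (t' := (t + lambda) / 2).
    assert (Ht1 : t < t') by (unfold t'; lra). assert (Ht2 : t' < lambda) by (unfold t'; lra).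
    assert (hb' : kappa + df t' < 0) by (apply below; lra).
    assert (mprime : forall u, 0 < u < R0 ->
       f u + kappa * u >= f t' + kappa * t' + (kappa + df t') * (lambda - t')).
    { intros u Hu. destruct (Rle_dec u lambda).
      - pose proof (tang t' u ltac:(lra) ltac:(lra)).
        assert (Hprod : (kappa + df t') * (u - lambda) >= 0) by nra.
        nra.
      - assert (HlR : lambda < R0) by lra. pose proof (above HlR).
        destruct (mvtf lambda u) as [c [Hc E]]; try lra.
        assert (df lambda <= df c) by (apply mono; lra).
        pose proof (tang t' lambda ltac:(lra) ltac:(lra)).
        assert (Hprod : (kappa + df t') * (lambda - t') = kappa * (lambda - t') + df t' * (lambda - t')) by ring.
        assert (Hprod2 : (df c + kappa) * (u - lambda) >= 0) by nra.
        nra. }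
    assert (mle : f t' + kappa * t' + (kappa + df t') * (lambda - t') <= 0).
    { apply Rnot_lt_le. intro Hm.
      set (m := f t' + kappa * t' + (kappa + df t') * (lambda - t')) in *.
      set (w := m / R0). assert (Hw : 0 < w) by (apply Rdiv_lt_0_compat; lra).
      assert (Hw2 : m = w * R0) by (unfold w; field; lra).
      assert (kappa <= kappa - w); [|lra].
      apply klub. intros y [u [Hu ->]]. apply div_le; [lra|].
      pose proof (mprime u Hu). nra. }
    pose proof (stang t t' ht0 Ht1 ltac:(lra)) as Hst. fold d in Hst.
    assert (Hmo : d <= df t') by (unfold d; apply mono; lra).
    assert (E1 : (kappa + df t') * (lambda - t') - (kappa + d) * (lambda - t') = (df t' - d) * (lambda - t')) by ring.
    assert (E2 : 0 <= (df t' - d) * (lambda - t')) by (apply Rmult_le_pos; lra).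
    assert (E3 : (- kappa - d) * (lambda - t) = - ((kappa + d) * (lambda - t')) - kappa * (t' - t) - d * (t' - t)) by ring.
    rewrite E3. lra. }
  set (g := f t + eps) in *. assert (Hgdef : g = f t + eps) by reflexivity.
  set (A := - kappa - d). set (B := - d). fold A in Key.
  assert (hA : 0 < A) by (unfold A; lra). assert (hB : 0 < B) by (unfold B; lra).
  assert (hB1 : B <= 1) by (unfold B; lra).
  assert (hAB : A <= (1 - kappa) * B) by (unfold A, B; nra).
  assert (h2k : 0 < 2 - kappa) by lra.
  assert (hth : theta * (2 - kappa) <= kappa).
  { destruct htheta as [_ H]. apply Rmult_le_compat_r with (r := 2 - kappa) in H; [|lra].
    replace (kappa / (2 - kappa) * (2 - kappa)) with kappa in H by (field; lra). exact H. }
  assert (hc : (1 + theta) * (1 - kappa) <= 1 - theta) by nra.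
  assert (hc0 : 0 <= (1 + theta) * (1 - kappa)) by (apply Rmult_le_pos; lra).
  set (s := (1 + theta) * g / B).
  assert (HsB : s * B = (1 + theta) * g) by (unfold s; field; lra).
  assert (hdne : df t <> 0) by (unfold d in hd; lra).
  assert (Htp : tp = t + s) by (unfold tp, s, B, d; field; exact hdne).
  assert (hs : 0 < s) by (unfold s; apply Rdiv_lt_0_compat; [nra| lra]).
  assert (hgk : g <= f t + kappa * t) by (unfold g; lra).
  set (v := t + g / A).
  assert (hv : v < lambda).
  { unfold v. assert (g / A < lambda - t); [|lra]. apply div_lt; [lra|]. nra. }
  assert (hsA : s * A <= g).
  { assert (s * A <= s * ((1 - kappa) * B)) by (apply Rmult_le_compat_l; lra).
    assert (s * ((1 - kappa) * B) = (1 - kappa) * ((1 + theta) * g)) by (rewrite <- HsB; ring).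
    nra. }
  assert (hsv : t + s <= v).
  { unfold v. assert (s <= g / A); [|lra].
    apply Rmult_le_reg_r with A; [lra|]. replace (g / A * A) with g by (field; lra). exact hsA. }
  assert (Hgoal1 : t < tp) by lra.
  assert (hge : 0 <= g) by lra.
  set (e := f tp - f t - d * s).
  assert (He0 : 0 < e).
  { unfold e. rewrite Htp. pose proof (stang t (t + s) ht0 ltac:(lra) ltac:(lra)). fold d in H.
    replace (t + s - t) with s in H by ring. lra. }
  assert (Hfe : f tp + ep = theta * g + e).
  { unfold ep, e. fold g. assert (d * s = - ((1 + theta) * g)) by (rewrite <- HsB; unfold B; ring). lra. }
  assert (hvt : v - t = g / A) by (unfold v; ring).
  assert (hvt0 : 0 < v - t) by (rewrite hvt; apply Rdiv_lt_0_compat; lra).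
  set (L := (df v - d) / (v - t)).
  assert (conv : forall c, t <= c <= v -> df c <= d + L * (c - t)).
  { intros c Hc. set (a := (c - t) / (v - t)).
    assert (Ha : 0 <= a <= 1).
    { unfold a. split; [apply Rdiv_le_0_compat; lra|]. apply div_le; lra. }
    pose proof (h2b v t a ltac:(lra) ltac:(lra) Ha) as Hcv.
    replace (a * v + (1 - a) * t) with c in Hcv by (unfold a; field; lra).
    replace (d + L * (c - t)) with (a * df v + (1 - a) * df t) by (unfold L, a, d; field; lra).
    exact Hcv. }
  destruct (mvt_phi f df R0 hD t tp d (L / 2) ltac:(lra) ltac:(lra)) as [c [Hc Ephi]].
  assert (Hcc : df c - d - 2 * (L / 2) * (c - t) <= 0) by (pose proof (conv c ltac:(lra)); lra).
  assert (Hepos : (df c - d - 2 * (L / 2) * (c - t)) * (tp - t) <= 0) by (apply Rmult_le_0_r; lra).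
  assert (HeL : e <= L / 2 * s ^ 2).
  { unfold e. replace (tp - t) with s in Ephi, Hepos by lra. lra. }
  assert (hdv : df v < - kappa) by (pose proof (below v ltac:(lra)); lra).
  assert (HLg : L * g < A * A).
  { assert (L * (g / A) = df v - d) by (unfold L; rewrite <- hvt; field; lra).
    assert (L * g = (df v - d) * A) by (rewrite <- H; field; lra).
    rewrite H0. apply Rmult_lt_compat_r; [lra|]. unfold A; lra. }
  set (X := A * s).
  assert (HX0 : 0 <= X) by (unfold X; nra).
  assert (HX : X <= (1 - theta) * g).
  { assert (X * B = A * ((1 + theta) * g)) by (unfold X; rewrite <- HsB; ring).
    assert (A * ((1 + theta) * g) <= (1 - kappa) * B * ((1 + theta) * g)) by (apply Rmult_le_compat_r; nra).
    assert ((1 - kappa) * B * ((1 + theta) * g) = B * g * ((1 + theta) * (1 - kappa))) by ring.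
    assert (B * g * ((1 + theta) * (1 - kappa)) <= B * g * (1 - theta)) by (apply Rmult_le_compat_l; [apply Rmult_le_pos|]; lra).
    assert (X * B <= (1 - theta) * g * B) by lra.
    apply Rmult_le_reg_r with B; lra. }
  assert (H2e : 2 * g * e < (1 - theta) ^ 2 * g ^ 2).
  { assert (2 * g * e <= g * L * s ^ 2) by nra.
    assert (g * L * s ^ 2 < A * A * s ^ 2) by (apply Rmult_lt_compat_r; nra).
    assert (A * A * s ^ 2 = X ^ 2) by (unfold X; ring).
    assert (X ^ 2 <= ((1 - theta) * g) ^ 2) by (apply pow_incr; lra).
    nra. }
  assert (hgp : 0 < g) by lra.
  assert (Hfin : e < (1 - theta) ^ 2 * g / 2).
  { apply Rmult_lt_reg_l with (2 * g); [lra|]. replace (2 * g * ((1 - theta) ^ 2 * g / 2)) with ((1 - theta) ^ 2 * g ^ 2) by (field; lra). exact H2e. }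
  split; [|split; [exact Hgoal1|split]].
  - unfold Omega. split; [lra|]. split; [split|].
    + unfold ep; fold g. nra.
    + unfold ep; fold g. rewrite Htp.
      assert (kappa * s * B = kappa * ((1 + theta) * g)) by (rewrite <- HsB; ring).
      assert (0 <= kappa * s * (1 - B)) by (apply Rmult_le_pos; [apply Rmult_le_pos|]; lra).
      assert (2 * theta <= kappa * (1 + theta)) by nra.
      assert (2 * theta * g <= kappa * (1 + theta) * g) by (apply Rmult_le_compat_r; lra).
      assert (kappa * (1 + theta) * g = kappa * ((1 + theta) * g)) by ring.
      rewrite Rmult_plus_distr_l. lra.
    + rewrite Hfe. nra.
  - unfold ep; fold g. nra.
  - rewrite Hfe. replace ((1 + theta ^ 2) / 2 * g) with (theta * g + (1 - theta) ^ 2 * g / 2) by field. lra.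
Qed.
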